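(* For every sequence of digits in $D$ and every $n\ge1$: (1) $p_n/q_n$ lies between $p_n'/q_n'$ and $p_n''/q_n''$; (2) $p_{n-1}/q_{n-1}$ does not lie between $p_n'/q_n'$ and $p_n''/q_n''$; (3) the three numbers $p_n/q_n$, $p_n'/q_n'$, $p_n''/q_n''$ are distinct and all lie in the half-open interval $I_{n-1}$ with endpoints $p_{n-1}/q_{n-1}$ and $p_{n-1}''/q_{n-1}''$ that contains $p_{n-1}''/q_{n-1}''$ but not $p_{n-1}/q_{n-1}$.
   Context: Admissible digits: $D=\{(1,1)\}\cup\{(a,\varepsilon): a\in\mathbb Z,\ a\ge2,\ \varepsilon\in\{-1,1\}\}$. Fix digits $(a_1,\varepsilon_1),(a_2,\varepsilon_2),\dots\in D$. For $n\ge1$, with $M=\begin{pmatrix}1&-1\\1&0\end{pmatrix}$, $J=\begin{pmatrix}2&-1\\1&0\end{pmatrix}$, $E(a,\varepsilon)=\begin{pmatrix}a&\varepsilon\\1&0\end{pmatrix}$, define integers by $M E(a_1,\varepsilon_1) J\cdots J E(a_n,\varepsilon_n) J=\begin{pmatrix}p_n&-p_n'\\ q_n&-q_n'\end{pmatrix}$ and $\begin{pmatrix}p_n''\\ q_n''\end{pmatrix}=M E(a_1,\varepsilon_1) J\cdots J E(a_n,\varepsilon_n)\begin{pmatrix}1\\1\end{pmatrix}$; set $p_0=q_0=1$, $p_0''=0$, $q_0''=1$. Then $p_n/q_n$, $p_n'/q_n'$, $p_n''/q_n''$ equal the finite continued fraction $1-\cfrac{1}{a_1+\cfrac{\varepsilon_1}{2-\cfrac{1}{\ddots\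 \cfrac{\varepsilon_{n-1}}{2-\cfrac{1}{c}}}}}$ with last term $c=a_n+\varepsilon_n/2$, $c=a_n$, $c=a_n+\varepsilon_n$ respectively (principal, sub-, pseudo-convergents); all $q$'s are positive. *)

(* Defs.v *)
From HB Require Import structures.
From mathcomp Require Import all_boot all_order all_algebra.
Set Implicit Arguments. Unset Strict Implicit. Unset Printing Implicit Defensive.
Import Order.TTheory GRing.Theory Num.Theory.
Local Open Scope ring_scope.

Definition mx2 (a b c d : int) : 'M[int]_2 :=
  \matrix_(i < 2, j < 2)
    if (i : nat) == 0%N then (if (j : nat) == 0%N then a else b)
    else (if (j : nat) == 0%N then c else d).

Definition Mmx : 'M[int]_2 := mx2 1 (-1) 1 0.
Definition Jmx : 'M[int]_2 := mx2 2 (-1) 1 0.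
Definition Emx (a e : int) : 'M[int]_2 := mx2 a e 1 0.

Definition admissible (a e : int) : Prop :=
  (a = 1 /\ e = 1) \/ (2 <= a /\ (e = 1 \/ e = -1)).

(* digits are given by a : nat -> int and e : nat -> int, digit k = (a k, e k)
   for k >= 1 (the value at index 0 is irrelevant). *)

Fixpoint prodJ (a e : nat -> int) (n : nat) : 'M[int]_2 :=
  match n with
  | 0%N => Mmx
  | m.+1 => prodJ a e m *m Emx (a m.+1) (e m.+1) *m Jmx
  end.

Definition i0 : 'I_2 := ord0.
Definition i1 : 'I_2 := ord_max.

(* principal convergent numerators/denominators (p_0 = q_0 = 1) *)
Definition pP (a e : nat -> int) n : int := prodJ a e n i0 i0.
Definition qP (a e : nat -> int) n : int := prodJ a e n i1 i0.
(* sub-convergents, n >= 1 *)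
Definition pS (a e : nat -> int) n : int := - prodJ a e n i0 i1.
Definition qS (a e : nat -> int) n : int := - prodJ a e n i1 i1.
(* pseudo-convergents: M E1 J ... J En (1,1)^T for n >= 1; p''_0 = 0, q''_0 = 1 *)
Definition pseudoMx (a e : nat -> int) n : 'M[int]_2 :=
  match n with
  | 0%N => mx2 0 0 1 0
  | m.+1 => prodJ a e m *m Emx (a m.+1) (e m.+1)
  end.
Definition pPs (a e : nat -> int) n : int :=
  pseudoMx a e n i0 i0 + pseudoMx a e n i0 i1.
Definition qPs (a e : nat -> int) n : int :=
  pseudoMx a e n i1 i0 + pseudoMx a e n i1 i1.

Definition cP a e n : rat := (pP a e n)%:~R / (qP a e n)%:~R.
Definition cS a e n : rat := (pS a e n)%:~R / (qS a e n)%:~R.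
Definition cPs a e n : rat := (pPs a e n)%:~R / (qPs a e n)%:~R.

Definition between (x y z : rat) : bool :=
  (Num.min y z < x) && (x < Num.max y z).

Definition in_halfopen (x y z : rat) : bool :=
  [&& Num.min x y <= z, z <= Num.max x y & z != x].

(* Main.v *)
Require Import Defs.
From HB Require Import structures.
From mathcomp Require Import all_boot all_order all_algebra.
From mathcomp Require Import ring lra zify.
Import Order.TTheory GRing.Theory Num.Theory.
Local Open Scope ring_scope.

Lemma mul2E (A B : 'M[int]_2) i j : (A *m B) i j = A i i0 * B i0 j + A i i1 * B i1 j.
Proof. rewrite !mxE !big_ord_recr big_ord0 /= add0r. by have -> : widen_ord (leqnSn 1) (ord_max : 'I_1) = i0 by apply: val_inj. Qed.

Lemma mx2E a b c d : [/\ mx2 a b c d i0 i0 = a, mx2 a b c d i0 i1 = b,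
   mx2 a b c d i1 i0 = c & mx2 a b c d i1 i1 = d].
Proof. by rewrite !mxE. Qed.

Section S.
Variables (a e : nat -> int).
Lemma recP m : pP a e m.+1 = (2 * a m.+1 + e m.+1) * pP a e m - 2 * pS a e m
  /\ qP a e m.+1 = (2 * a m.+1 + e m.+1) * qP a e m - 2 * qS a e m
  /\ pS a e m.+1 = a m.+1 * pP a e m - pS a e m
  /\ qS a e m.+1 = a m.+1 * qP a e m - qS a e m
  /\ pPs a e m.+1 = (a m.+1 + e m.+1) * pP a e m - pS a e m
  /\ qPs a e m.+1 = (a m.+1 + e m.+1) * qP a e m - qS a e m.
Proof.
rewrite /pP /qP /pS /qS /pPs /qPs /=.
rewrite !mul2E /Emx /Jmx.
have [h1 h2 h3 h4] := mx2E (a m.+1) (e m.+1) 1 0.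
have [g1 g2 g3 g4] := mx2E 2 (-1) 1 0.
rewrite h1 h2 h3 h4 g1 g2 g3 g4.
split; [ring|split; [ring|split;[ring|split;[ring|split;ring]]]].
Qed.
End S.
Section S2.
Variables (a e : nat -> int).
Lemma PsE m : pPs a e m = pP a e m - pS a e m /\ qPs a e m = qP a e m - qS a e m.
Proof.
case: m => [|m].
  rewrite /pPs /pP /pS /qPs /qP /qS /= /Mmx.
  have [h1 h2 h3 h4] := mx2E 0 0 1 0.
  have [g1 g2 g3 g4] := mx2E 1 (-1) 1 0.
  by rewrite h1 h2 h3 h4 g1 g2 g3 g4.
have [h1 [h2 [h3 [h4 [h5 h6]]]]] := recP a e m.
rewrite h1 h2 h3 h4 h5 h6; split; ring.
Qed.

Lemma rec2 m : let A := a m.+1 in let E := e m.+1 in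
  let p := pP a e m in let q := qP a e m in let pw := pPs a e m in let qw := qPs a e m in
  pP a e m.+1 = (2*A+E-2) * p + 2 * pw /\ qP a e m.+1 = (2*A+E-2) * q + 2 * qw /\
      pS a e m.+1 = (A-1) * p + pw /\ qS a e m.+1 = (A-1) * q + qw /\
      pPs a e m.+1 = (A+E-1) * p + pw /\ qPs a e m.+1 = (A+E-1) * q + qw.
Proof.
have [h1 [h2 [h3 [h4 [h5 h6]]]]] := recP a e m.
have [g1 g2] := PsE m.
rewrite /= h1 h2 h3 h4 h5 h6 g1 g2; do ![split]; ring.
Qed.

Lemma inv (hD : forall k : nat, (1 <= k)%N -> admissible (a k) (e k)) m :
  0 < qP a e m /\ 0 < qPs a e m /\ pP a e m * qPs a e m - pPs a e m * qP a e m != 0.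
Proof.
elim: m => [|m [h1 [h2 h3]]].
  rewrite /pPs /pP /qPs /qP /= /Mmx.
  by rewrite !mxE.
have := hD m.+1 isT; rewrite /admissible.
have [-> [-> [_ [_ [-> ->]]]]] := rec2 m.
move: h3; set p := pP a e m; set q := qP a e m; set pw := pPs a e m; set qw := qPs a e m.
move=> h3 hA.
have hE : e m.+1 != 0 by case: hA => [[_ ->]|[_ [->|->]]].
have : (2*a m.+1+e m.+1-2) * q + 2 * qw > 0 /\ (a m.+1 + e m.+1 - 1) * q + qw > 0 by nia.
move=> [-> ->]; do 2 split=> //.
have -> : ((2 * a m.+1 + e m.+1 - 2) * p + 2 * pw) * ((a m.+1 + e m.+1 - 1) * q + qw) -
    ((a m.+1 + e m.+1 - 1) * p + pw) * ((2 * a m.+1 + e m.+1 - 2) * q + 2 * qw)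
   = - e m.+1 * (p * qw - pw * q) by ring.
by rewrite mulf_neq0 // oppr_eq0.
Qed.
End S2.
Lemma mid (X W S T : rat) : 0 <= S -> 0 < T -> X != W ->
  in_halfopen X W ((S*X+T*W)/(S+T)).
Proof.
move=> hS hT hXW; set Z := _ / _.
have hST : 0 < S + T by lra.
have hZ : Z * (S + T) = S*X+T*W by rewrite /Z divfK // gt_eqF.
rewrite /in_halfopen; case: (ltgtP X W) hXW => // hl _.
- idtac.
  have h1 : X < Z by nra.
  have h2 : Z <= W by nra.
  by rewrite (ltW h1) h2 gt_eqF.
- idtac.
  have h1 : Z < X by nra.
  have h2 : W <= Z by nra.
  by rewrite (ltW h1) h2 lt_eqF.
Qed.

Lemma strict (X W S T : rat) : 0 < S -> 0 < T -> X != W ->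
  between ((S*X+T*W)/(S+T)) X W.
Proof.
move=> hS hT hXW; set Z := _ / _.
have hST : 0 < S + T by lra.
have hZ : Z * (S + T) = S*X+T*W by rewrite /Z divfK // gt_eqF.
rewrite /between; case: (ltgtP X W) hXW => // hl _.
- idtac.
  have h1 : X < Z by nra.
  have h2 : Z < W by nra.
  by rewrite h1 h2.
- idtac.
  have h1 : Z < X by nra.
  have h2 : W < Z by nra.
  by rewrite h1 h2.
Qed.

Lemma notbet (X W Z1 Z2 : rat) : in_halfopen X W Z1 -> in_halfopen X W Z2 ->
  ~~ between X Z1 Z2.
Proof.
rewrite /in_halfopen /between => /and3P[a1 b1 c1] /and3P[a2 b2 c2].
case: (leP X W) a1 b1 a2 b2 => hl a1 b1 a2 b2.
- 
  have : X < Z1 by rewrite lt_neqAle eq_sym c1 a1.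
  have : X < Z2 by rewrite lt_neqAle eq_sym c2 a2.
  move=> h1 h2; apply/negP => /andP[h _].
  by case: (leP Z1 Z2) h => _ h; lra.
- 
  have : Z1 < X by rewrite lt_neqAle c1 b1.
  have : Z2 < X by rewrite lt_neqAle c2 b2.
  move=> h1 h2; apply/negP => /andP[_ h].
  by case: (leP Z1 Z2) h => _ h; lra.
Qed.

Lemma bet_neq (x y z : rat) : between x y z -> [/\ x != y, x != z & y != z].
Proof.
rewrite /between => /andP[h1 h2].
case: (leP y z) h1 h2 => hl h1 h2.
- have hyz : y < z by lra.
  by rewrite (gt_eqF h1) (lt_eqF h2) (lt_eqF hyz).
- have hyz : z < y by lra.
  by rewrite (gt_eqF h1) (lt_eqF h2) (gt_eqF hyz).
Qed.
Lemma fracE (x1 x2 y1 y2 : int) : x2 != 0 -> y2 != 0 ->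
  (x1%:~R / x2%:~R == y1%:~R / y2%:~R :> rat) = (x1 * y2 == y1 * x2).
Proof. by move=> h1 h2; rewrite eqr_div ?intr_eq0 // -!intrM eqr_int. Qed.

Lemma combE (s t p q pw qw : int) : q != 0 -> qw != 0 -> 0 < s * q + t * qw ->
  ((s * p + t * pw)%:~R / (s * q + t * qw)%:~R : rat) =
  ((s%:~R*q%:~R) * (p%:~R/q%:~R) + (t%:~R*qw%:~R)*(pw%:~R/qw%:~R)) / (s%:~R*q%:~R + t%:~R*qw%:~R).
Proof.
move=> h1 h2 h3; rewrite !intrD !intrM.
have h4 : (s%:~R * q%:~R + t%:~R * qw%:~R : rat) != 0 by rewrite -!intrM -intrD intr_eq0 gt_eqF.
field; rewrite h4 !intr_eq0 h1 h2 //.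
Qed.

Theorem lemma3p6 (a e : nat -> int)
  (hD : forall k : nat, (1 <= k)%N -> admissible (a k) (e k))
  (n : nat) (hn : (1 <= n)%N) :
  between (cP a e n) (cS a e n) (cPs a e n)
  /\ ~~ between (cP a e n.-1) (cS a e n) (cPs a e n)
  /\ [/\ cP a e n != cS a e n, cP a e n != cPs a e n & cS a e n != cPs a e n]
  /\ [/\ in_halfopen (cP a e n.-1) (cPs a e n.-1) (cP a e n),
         in_halfopen (cP a e n.-1) (cPs a e n.-1) (cS a e n)
       & in_halfopen (cP a e n.-1) (cPs a e n.-1) (cPs a e n)].
Proof.
case: n hn => // m _ /=.
have [hq [hqw hcr]] := @inv a e hD m.
have hA := hD m.+1 isT; rewrite /admissible in hA.
have hE : e m.+1 != 0 by case: hA => [[_ ->]|[_ [->|->]]].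
have ha1 : 0 <= a m.+1 - 1 by lia.
have ha2 : 0 <= a m.+1 + e m.+1 - 1 by lia.
have [hP1 [hP2 [hS1 [hS2 [hW1 hW2]]]]] := rec2 a e m.
set A := a m.+1 in hP1 hP2 hS1 hS2 hW1 hW2 ha1 ha2 hE.
set E := e m.+1 in hP1 hP2 hS1 hS2 hW1 hW2 ha1 ha2 hE.
set p := pP a e m in hP1 hP2 hS1 hS2 hW1 hW2 hcr.
set q := qP a e m in hP1 hP2 hS1 hS2 hW1 hW2 hcr hq.
set pw := pPs a e m in hP1 hP2 hS1 hS2 hW1 hW2 hcr.
set qw := qPs a e m in hP1 hP2 hS1 hS2 hW1 hW2 hcr hqw.
have hXW : cP a e m != cPs a e m.
  by rewrite /cP /cPs fracE ?(gt_eqF hq) ?(gt_eqF hqw) // -subr_eq0.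
have hSW : cS a e m.+1 != cPs a e m.+1.
  have n1 : (A - 1) * q + qw != 0 by rewrite gt_eqF //; nia.
  have n2 : (A + E - 1) * q + qw != 0 by rewrite gt_eqF //; nia.
  rewrite /cS /cPs hS1 hS2 hW1 hW2 fracE //.
  rewrite -subr_eq0.
  have -> : ((A - 1) * p + pw) * ((A + E - 1) * q + qw) - ((A + E - 1) * p + pw) * ((A - 1) * q + qw)
     = - E * (p * qw - pw * q) by ring.
  by rewrite mulf_neq0 // oppr_eq0.
set X := cP a e m; set W := cPs a e m.
have hqr : 0 < (q%:~R : rat) by rewrite ltr0z.
have hqwr : 0 < (qw%:~R : rat) by rewrite ltr0z.
have har : 0 <= ((A-1)%:~R : rat) by rewrite ler0z.
have hbr : 0 <= ((A+E-1)%:~R : rat) by rewrite ler0z.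
have eS : cS a e m.+1 = (((A-1)%:~R * q%:~R) * X + qw%:~R * W) / ((A-1)%:~R * q%:~R + qw%:~R).
  rewrite /cS hS1 hS2; have := combE (A-1) 1 p q pw qw; rewrite !mul1r => -> //; [by rewrite gt_eqF | by rewrite gt_eqF | nia].
have eW : cPs a e m.+1 = (((A+E-1)%:~R * q%:~R) * X + qw%:~R * W) / ((A+E-1)%:~R * q%:~R + qw%:~R).
  rewrite /cPs hW1 hW2; have := combE (A+E-1) 1 p q pw qw; rewrite !mul1r => -> //; [by rewrite gt_eqF | by rewrite gt_eqF | nia].
have eP : cP a e m.+1 = ((((A-1) + (A+E-1))%:~R * q%:~R) * X + (2%:~R * qw%:~R) * W) /
    (((A-1)+(A+E-1))%:~R * q%:~R + 2%:~R * qw%:~R).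
  rewrite /cP hP1 hP2.
  have -> : 2 * A + E - 2 = (A - 1) + (A + E - 1) by ring.
  rewrite combE ?gt_eqF //; nia.
have h2r : 0 < (2%:~R * qw%:~R : rat) by rewrite mulr_gt0 // ltr0z.
have habr : 0 <= (((A-1) + (A+E-1))%:~R : rat) by rewrite ler0z; lia.
have hbet : between (cP a e m.+1) (cS a e m.+1) (cPs a e m.+1).
  have -> : cP a e m.+1 = ((((A-1)%:~R * q%:~R + qw%:~R) * cS a e m.+1 +
       ((A+E-1)%:~R * q%:~R + qw%:~R) * cPs a e m.+1) /
       (((A-1)%:~R * q%:~R + qw%:~R) + ((A+E-1)%:~R * q%:~R + qw%:~R))).
    rewrite eP eS eW; field; do ?(apply/andP; split); rewrite gt_eqF //; nra.
  apply: strict => //; nra.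
have h1 : in_halfopen X W (cP a e m.+1) by rewrite eP; apply: mid => //; nra.
have h2 : in_halfopen X W (cS a e m.+1) by rewrite eS; apply: mid => //; nra.
have h3 : in_halfopen X W (cPs a e m.+1) by rewrite eW; apply: mid => //; nra.
split=> //; split; first exact: notbet _ _ _ _ h2 h3.
split; last by split.
by have [] := bet_neq _ _ _ hbet.
Qed.
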